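(* Let $\mu$ be an $E_2$-invariant Borel probability measure on $\mathbb{T}$ and let $F$ be a $p$-flower for $E_2$ (with $p\ge 3$) such that $\mathrm{supp}(\mu)\subset F$. If $\mu(P_i)=0$ for some petal $P_i$ of $F$, then there is a $(p-2)$-flower $\tilde F$ for $E_2$ with $\mathrm{supp}(\mu)\subset\tilde F$ and $P_i\not\subset\tilde F$.
   Context: $\mathbb{T}=\mathbb{R}/\mathbb{Z}$, $E_2(x)=2x\bmod1$. A preimage selector for $E_2$ is a map $\eta:\mathbb{T}\to\mathbb{T}$ with $E_2(\eta(x))=x$ for all $x$, having finitely many discontinuities, each a jump discontinuity (both one-sided limits exist, differ, and one equals the value). A $p$-flower is $\overline{\eta(\mathbb{T})}$ for a preimage selector $\eta$ with exactly $p$ discontinuities; its $p$ connected components (closed intervals) are its petals. *)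

(* Defs.v *)
(* The circle T = R/Z is represented by the
   representatives in [0,1) ("onT"), with the quotient metric dT. *)
From mathcomp Require Import all_boot all_order all_algebra.
From mathcomp Require Import all_classical all_reals all_analysis.
Set Implicit Arguments. Unset Strict Implicit. Unset Printing Implicit Defensive.
Import Order.TTheory GRing.Theory Num.Theory.
Local Open Scope classical_set_scope.
Local Open Scope ring_scope.

Section Circle.
Variable R : realType.

Definition frac (x : R) : R := x - (Num.floor x)%:~R.

Definition onT (x : R) : Prop := 0 <= x < 1.

Definition dT (x y : R) : R := Num.min (frac (x - y)) (1 - frac (x - y)).

Definition E2 (x : R) : R := frac (2 * x).

(* open subsets of T (only the trace on [0,1) matters) *)
Definition openT (U : set R) : Prop :=
  forall x, onT x -> U x ->
    exists2 e : R, 0 < e & forall y, onT y -> dT x y < e -> U y.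

Definition connectedT (S : set R) : Prop :=
  forall U V : set R, openT U -> openT V ->
    S `<=` U `|` V -> S `&` U `&` V = set0 ->
    S `&` U = set0 \/ S `&` V = set0.

Definition closureT (A : set R) : set R :=
  [set z | onT z /\ forall e : R, 0 < e -> exists2 x, A x & dT z x < e].

Definition preimage_selector (eta : R -> R) : Prop :=
  forall x, onT x -> onT (eta x) /\ E2 (eta x) = x.

Definition contT (eta : R -> R) (x : R) : Prop :=
  forall e : R, 0 < e -> exists2 d : R, 0 < d &
    forall y, onT y -> dT x y < d -> dT (eta x) (eta y) < e.

Definition left_limT (eta : R -> R) (x L : R) : Prop :=
  forall e : R, 0 < e -> exists2 d : R, 0 < d &
    forall t : R, 0 < t -> t < d -> dT (eta (frac (x - t))) L < e.
Definition right_limT (eta : R -> R) (x L : R) : Prop :=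
  forall e : R, 0 < e -> exists2 d : R, 0 < d &
    forall t : R, 0 < t -> t < d -> dT (eta (frac (x + t))) L < e.

Definition jumpT (eta : R -> R) (x : R) : Prop :=
  exists L Rl : R, [/\ onT L /\ onT Rl, left_limT eta x L, right_limT eta x Rl,
    L <> Rl & (eta x = L \/ eta x = Rl)].

Definition discT (eta : R -> R) : set R := [set x | onT x /\ ~ contT eta x].

Definition selector_with (p : nat) (eta : R -> R) : Prop :=
  [/\ preimage_selector eta,
      (exists s : seq R, [/\ uniq s, size s = p &
                            discT eta = [set x | x \in s]]) &
      forall x, discT eta x -> jumpT eta x].

Definition flower (p : nat) (F : set R) : Prop :=
  exists eta : R -> R, selector_with p eta /\
    F = closureT [set eta x | x in onT].

Definition petal (F P : set R) : Prop :=
  [/\ P `<=` F, P !=set0, connectedT P &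
      forall Q : set R, connectedT Q -> P `<=` Q -> Q `<=` F -> Q = P].

Definition suppT (mu : set R -> \bar R) : set R :=
  [set x | onT x /\ forall e : R, 0 < e ->
     (0 < mu [set y | onT y /\ (dT x y < e)%R])%E].

End Circle.

(* Main.v *)
Require Import Defs.
From mathcomp Require Import all_boot all_order all_algebra.
From mathcomp Require Import all_classical all_reals all_analysis.
From mathcomp Require Import lra zify measurable_realfun.
Import Order.TTheory GRing.Theory Num.Theory.
Import numFieldNormedType.Exports.
Local Open Scope classical_set_scope.
Local Open Scope ring_scope.
Set Implicit Arguments. Unset Strict Implicit. Unset Printing Implicit Defensive.
Local Notation frac := Defs.frac.

Section Arith.
Variable R : realType.
Implicit Types x y z : R.

Lemma fracP x : 0 <= frac x < 1.
Proof.
rewrite /frac; have h1 := floor_le x; have h2 := floorD1_gt x.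
rewrite intrD in h2; apply/andP; split; lra.
Qed.

Lemma frac_onT x : onT (frac x).
Proof. exact: fracP. Qed.

Lemma fracE x y (n : int) : x = y + n%:~R -> onT y -> frac x = y.
Proof.
move=> -> /andP[h0 h1]; rewrite /frac.
have -> : Num.floor (y + n%:~R) = n.
  apply: floor_def; rewrite intrD; apply/andP; split; lra.
lra.
Qed.

Lemma frac_int x : exists n : int, x = frac x + n%:~R.
Proof. by exists (Num.floor x); rewrite /frac; lra. Qed.

Lemma frac_eqmod x y (n : int) : x = y + n%:~R -> frac x = frac y.
Proof.
move=> ->; have [m hm] := frac_int y.
apply: (@fracE _ _ (n + m)); last exact: frac_onT.
rewrite intrD {1}hm; lra.
Qed.

Lemma frac_id x : onT x -> frac x = x.
Proof. by move=> h; apply: (@fracE _ _ 0) => //; rewrite addr0. Qed.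

Lemma fracK x : frac (frac x) = frac x.
Proof. exact/frac_id/frac_onT. Qed.

Lemma frac0 : frac (0 : R) = 0.
Proof. by apply: frac_id; rewrite /onT lexx ltr01. Qed.

Lemma frac_addl x y : frac (frac x + y) = frac (x + y).
Proof.
have [n hn] := frac_int x; apply: (@frac_eqmod _ _ (- n)).
rewrite {2}hn intrN; lra.
Qed.

Lemma frac_addr x y : frac (x + frac y) = frac (x + y).
Proof. by rewrite addrC frac_addl addrC. Qed.

Lemma frac_subr x y : frac (x - frac y) = frac (x - y).
Proof.
have [n hn] := frac_int y; apply: (@frac_eqmod _ _ n).
rewrite {2}hn; lra.
Qed.

Lemma frac_subl x y : frac (frac x - y) = frac (x - y).
Proof. by rewrite frac_addl. Qed.

Lemma frac3 (a b c : R) :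
  frac (c - a) = frac (c - b) + frac (b - a) \/
  frac (c - a) = frac (c - b) + frac (b - a) - 1.
Proof.
have [h1 h2] := (fracP (c - b), fracP (b - a)).
move: h1 h2 => /andP[h1 h1'] /andP[h2 h2'].
have [hl|hl] := ltP (frac (c - b) + frac (b - a)) 1.
  left; apply: (@fracE _ _ (Num.floor (c - b) + Num.floor (b - a))).
    rewrite intrD /frac; lra.
  by rewrite /onT; apply/andP; split; lra.
right; apply: (@fracE _ _ (Num.floor (c - b) + Num.floor (b - a) + 1)).
  rewrite !intrD /frac; lra.
by rewrite /onT; apply/andP; split; lra.
Qed.

Lemma frac_eq0 x y : onT x -> onT y -> frac (x - y) = 0 -> x = y.
Proof.
move=> /andP[? ?] /andP[? ?] h.
have [n hn] := frac_int (x - y); rewrite h add0r in hn.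
have : n = 0.
  have h1 : (-1 : R) < n%:~R by lra.
  have h2 : n%:~R < (1 : R) by lra.
  have : (-1 < n)%R by rewrite -(ltr_int R).
  have : (n < 1)%R by rewrite -(ltr_int R).
  lia.
by move=> n0; rewrite n0 in hn; lra.
Qed.

Lemma frac_diff_pos x y : onT x -> onT y -> x <> y -> 0 < frac (x - y).
Proof.
move=> hx hy hxy; have /andP[h _] := fracP (x - y).
rewrite lt_neqAle h andbT; apply/eqP => h0.
by apply: hxy; apply: frac_eq0.
Qed.

Lemma dT_le x y (n : int) : dT x y <= `|x - y - n%:~R|.
Proof.
rewrite /dT /frac; set n0 := Num.floor (x - y).
have h1 := floor_le (x - y); have h2 := floorD1_gt (x - y).
rewrite -/n0 intrD in h2.
have [h|h] := lerP n n0.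
  have : n%:~R <= n0%:~R :> R by rewrite ler_int.
  move=> hh; rewrite ge_min; apply/orP; left.
  apply: le_trans (ler_norm _); lra.
have : (n0 + 1 <= n)%R by lia.
rewrite -(ler_int R) intrD => hh; rewrite ge_min; apply/orP; right.
rewrite ler_normr; apply/orP; right; lra.
Qed.

Lemma dT_ex x y : exists n : int, dT x y = `|x - y - n%:~R|.
Proof.
rewrite /dT /frac; set n0 := Num.floor (x - y).
have h1 := floor_le (x - y); have h2 := floorD1_gt (x - y).
rewrite -/n0 intrD in h2.
have [h|h] := leP (x - y - n0%:~R) (1 - (x - y - n0%:~R)).
  exists n0; rewrite ger0_norm //; lra.
exists (n0 + 1).
rewrite intrD ler0_norm; lra.
Qed.

Lemma dT_ge0 x y : 0 <= dT x y.
Proof. have [n ->] := dT_ex x y; exact: normr_ge0. Qed.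

Lemma dT_sym x y : dT y x = dT x y.
Proof.
apply/eqP; rewrite eq_le; apply/andP; split.
  have [n ->] := dT_ex x y; apply: le_trans (dT_le _ _ (- n)) _.
  rewrite intrN; have -> : y - x - - n%:~R = -(x - y - n%:~R) by lra.
  by rewrite normrN.
have [n ->] := dT_ex y x; apply: le_trans (dT_le _ _ (- n)) _.
rewrite intrN; have -> : x - y - - n%:~R = -(y - x - n%:~R) by lra.
by rewrite normrN.
Qed.

Lemma dT_tri x y z : dT x z <= dT x y + dT y z.
Proof.
have [n1 ->] := dT_ex x y; have [n2 ->] := dT_ex y z.
apply: le_trans (dT_le _ _ (n1 + n2)) _.
have -> : x - z - (n1 + n2)%:~R = (x - y - n1%:~R) + (y - z - n2%:~R).
  by rewrite intrD; lra.
exact: ler_normD.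
Qed.

Lemma dT_abs x y : dT x y <= `|x - y|.
Proof. by have := dT_le x y 0; rewrite subr0. Qed.

Lemma dT_xx x : dT x x = 0.
Proof.
apply/eqP; rewrite eq_le dT_ge0 andbT; apply: le_trans (dT_abs x x) _.
by rewrite subrr normr0.
Qed.

Lemma dT_fracl x y : dT (frac x) y = dT x y.
Proof. by rewrite /dT frac_subl. Qed.

Lemma dT_fracr x y : dT x (frac y) = dT x y.
Proof. by rewrite /dT frac_subr. Qed.

Lemma dT0 x y : onT x -> onT y -> dT x y = 0 -> x = y.
Proof.
move=> hx hy; rewrite /dT => h; apply: frac_eq0 => //.
have := fracP (x - y) => /andP[h0 h1].
move: h; rewrite /Num.min; case: ifP => _ ; lra.
Qed.

Lemma dT_cases x y : onT y ->
  y = frac (x + dT x y) \/ y = frac (x - dT x y).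
Proof.
move=> hy; have [n hn] := dT_ex x y.
have [h|h] := leP 0 (x - y - n%:~R).
  right; rewrite hn ger0_norm //; symmetry; apply: (@fracE _ _ n) => //; lra.
left; rewrite hn ltr0_norm //; symmetry; apply: (@fracE _ _ n) => //; lra.
Qed.

Lemma dT_small x y : dT x y <= Num.min (frac (x - y)) (1 - frac (x - y)).
Proof. by []. Qed.

End Arith.

Section Flip.
Variable R : realType.
Implicit Types x y z u v : R.

Definition flip y : R := frac (y + 2^-1).

Lemma flip_onT y : onT (flip y).
Proof. exact: frac_onT. Qed.

Lemma dT_shift x y c : dT (x + c) (y + c) = dT x y.
Proof. by rewrite /dT; have -> : x + c - (y + c) = x - y by lra. Qed.

Lemma dT_flip x y : dT (flip x) (flip y) = dT x y.
Proof. by rewrite /flip dT_fracl dT_fracr dT_shift. Qed.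

Lemma frac2 u : frac (2 * frac u) = frac (2 * u).
Proof.
have [n hn] := frac_int u; apply: (@frac_eqmod _ _ _ (- (2 * n))).
rewrite {2}hn intrN intrM; lra.
Qed.

Lemma E2_frac u : E2 (frac u) = frac (2 * u).
Proof. exact: frac2. Qed.

Lemma E2_flip y : E2 (flip y) = E2 y.
Proof.
rewrite /E2 /flip frac2; apply: (@frac_eqmod _ _ _ 1); lra.
Qed.

Lemma flipK y : onT y -> flip (flip y) = y.
Proof.
move=> hy; rewrite /flip frac_addl; apply: (@fracE _ _ _ 1) => //; lra.
Qed.

Lemma dT_flip_self y : dT y (flip y) = 2^-1.
Proof.
rewrite /flip dT_fracr /dT.
have -> : y - (y + 2^-1) = - 2^-1 by lra.
have -> : frac (- 2^-1 : R) = 2^-1.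
  by apply: (@fracE _ _ _ (-1)); [lra | rewrite /onT; apply/andP; split; lra].
by rewrite /Num.min; case: ifP => _; lra.
Qed.

Lemma flip_neq y : onT y -> flip y <> y.
Proof.
move=> hy h; have := dT_flip_self y; rewrite h dT_xx; lra.
Qed.

Lemma preimage2 u v : onT u -> onT v -> E2 u = E2 v -> u = v \/ u = flip v.
Proof.
move=> /andP[hu0 hu1] /andP[hv0 hv1]; rewrite /E2 /frac => h.
set n := Num.floor (2 * u) - Num.floor (2 * v).
have hn : 2 * u - 2 * v = n%:~R by rewrite /n intrB; lra.
have h1 : (-2 : R) < n%:~R by lra.
have h2 : n%:~R < (2 : R) by lra.
have : (-2 < n)%R by rewrite -(ltr_int R).
have : (n < 2)%R by rewrite -(ltr_int R).
move=> a1 a2.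
have : n = 0 \/ n = 1 \/ n = -1 by lia.
case=> [n0|[n1|n1]]; rewrite ?n0 ?n1 in hn.
- by left; lra.
- right; rewrite /flip; symmetry; apply: (@fracE _ _ _ 0).
    by rewrite addr0; lra.
  rewrite /onT; apply/andP; split; lra.
- right; rewrite /flip; symmetry; apply: (@fracE _ _ _ 1).
    by lra.
  rewrite /onT; apply/andP; split; lra.
Qed.

Lemma preimage2' u v : onT u -> onT v -> E2 u = E2 v -> u <> v -> u = flip v.
Proof. by move=> hu hv h huv; case: (preimage2 hu hv h). Qed.

End Flip.

Section More.
Variable R : realType.
Implicit Types x y z a : R.

Lemma frac_eq_int x y : frac x = frac y -> exists n : int, x = y + n%:~R.
Proof.
move=> h; have [n hn] := frac_int x; have [m hm] := frac_int y.
by exists (n - m); rewrite intrB hn hm h; lra.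
Qed.

Lemma frac_small (t : R) : onT t -> frac t = t.
Proof. exact: frac_id. Qed.

Lemma frac_near a y y' : dT y y' < frac (y - a) -> dT y y' < 1 - frac (y - a) ->
  `|frac (y' - a) - frac (y - a)| = dT y y'.
Proof.
move=> h1 h2; have [n hn] := dT_ex y y'.
have [k hk] := frac_int (y - a).
have h0 := dT_ge0 y y'.
set w := y - y' - n%:~R in hn.
have hw : `|w| < frac (y - a) by rewrite -hn.
have hw' : `|w| < 1 - frac (y - a) by rewrite -hn.
move: hw hw'; rewrite !ltr_norml => /andP[a1 a2] /andP[a3 a4].
have -> : frac (y' - a) = frac (y - a) - w.
  apply: (@fracE _ _ _ (k - n)).
    by rewrite intrB /w; lra.
  by rewrite /onT; apply/andP; split; lra.
rewrite hn; have -> : frac (y - a) - w - frac (y - a) = - w by lra.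
by rewrite normrN.
Qed.

Lemma frac_shift z c (e : R) : 0 <= frac (z - c) + e < 1 ->
  frac (frac (z + e) - c) = frac (z - c) + e.
Proof.
move=> h; rewrite frac_subl; have [k hk] := frac_int (z - c).
apply: (@fracE _ _ _ k) => //; lra.
Qed.

Lemma dT_param a (t t' : R) : dT (frac (a + t)) (frac (a + t')) <= `|t - t'|.
Proof.
rewrite dT_fracl dT_fracr; apply: le_trans (dT_abs _ _) _.
by have -> : a + t - (a + t') = t - t' by lra.
Qed.

Lemma frac_param a (t : R) : onT t -> frac (frac (a + t) - a) = t.
Proof.
move=> ht; rewrite frac_subl; have -> : a + t - a = t by lra.
exact: frac_id.
Qed.

Lemma frac_recon y a : onT y -> frac (a + frac (y - a)) = y.
Proof.
move=> hy; rewrite frac_addr; have -> : a + (y - a) = y by lra.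
exact: frac_id.
Qed.

Lemma dT_lt_all x y : onT x -> onT y -> (forall e, 0 < e -> dT x y < e) -> x = y.
Proof.
move=> hx hy h; apply: dT0 => //.
apply/eqP; rewrite eq_le dT_ge0 andbT; apply/negPn/negP; rewrite -ltNge => hp.
by have := h _ hp; rewrite ltxx.
Qed.

End More.


Section LocConst.
Variable R : realType.

Lemma loc_const (f : R -> bool) (a b : R) : a <= b ->
  (forall t, a <= t <= b -> exists2 d : R, 0 < d &
     forall u, a <= u <= b -> `|u - t| < d -> f u = f t) ->
  forall t, a <= t <= b -> f t = f a.
Proof.
move=> ab H.
pose good (c : bool) := [set q : R * R | [/\ a <= q.1 <= b, f q.1 = c, 0 < q.2 &
   forall u, a <= u <= b -> `|u - q.1| < q.2 -> f u = f q.1]].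
pose C (c : bool) := \bigcup_(q in good c) ball q.1 q.2.
have oC c : open (C c) by apply: bigcup_open => q _; exact: ball_open.
have CE c u : a <= u <= b -> C c u <-> f u = c.
  move=> hu; split.
    case=> q [hq1 <- hq2 hq3]; rewrite -ball_normE /ball_ => hb.
    by apply: hq3 => //; rewrite distrC.
  move=> fu; have [d d0 hd] := H u hu; exists (u, d) => /=.
    by split => //.
  rewrite -ball_normE /ball_ /=.
  by have -> : `|u - u| = 0 :> R by rewrite subrr normr0.
have conn := @segment_connected R a b.
have itvE u : `[a, b]%classic u <-> a <= u <= b.
  by rewrite /= in_itv /=; split => /andP[-> ->].
have : [set u | a <= u <= b /\ f u = f a] = `[a, b]%classic.
  apply: conn.
  - by exists a; split => //; rewrite lexx ab.
  - exists (C (f a)) => //; apply/seteqP; split => u.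
      move=> [hu fu]; split; first by apply/itvE.
      by apply/CE.
    move=> [hu cu]; move/itvE in hu; split => //.
    by apply/CE.
  - exists (~` C (~~ f a)); first exact: open_closedC.
    apply/seteqP; split => u.
      move=> [hu fu]; split; first by apply/itvE.
      by move/(CE _ _ hu); rewrite fu; case: (f a).
    move=> [hu cu]; move/itvE in hu; split => //.
    by case E: (f u); case E': (f a) => //; exfalso; apply: cu; apply/CE => //;
      rewrite E E'.
move=> hE t ht; have : `[a, b]%classic t by apply/itvE.
by rewrite -hE => -[].
Qed.

End LocConst.


Section Cont.
Variable R : realType.
Variable eta : R -> R.
Hypothesis Hsel : preimage_selector eta.

Lemma eta_onT (x : R) : onT x -> onT (eta x).
Proof. by move=> h; case: (Hsel h). Qed.

Lemma eta_E2 (x : R) : onT x -> E2 (eta x) = x.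
Proof. by move=> h; case: (Hsel h). Qed.

Lemma E2_shift (x u : R) : onT x -> E2 (frac (eta x + u / 2)) = frac (x + u).
Proof.
move=> hx; rewrite E2_frac.
have -> : 2 * (eta x + u / 2) = 2 * eta x + u by lra.
by rewrite -[in RHS](eta_E2 hx) /E2 frac_addl.
Qed.

Lemma dT_half (x u v : R) : dT (frac (x + u / 2)) (frac (x + v / 2)) <= `|u - v| / 2.
Proof.
rewrite dT_fracl dT_fracr; apply: le_trans (dT_abs _ _) _.
have -> : x + u / 2 - (x + v / 2) = (u - v) / 2 by lra.
rewrite normrM normfV (ger0_norm (x:=2)) //.
Qed.

Lemma continuation (x t : R) : onT x -> 0 <= t ->
  (forall u, 0 <= u <= t -> contT eta (frac (x + u))) ->
  forall u, 0 <= u <= t -> eta (frac (x + u)) = frac (eta x + u / 2).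
Proof.
move=> hx ht hc.
pose f u := eta (frac (x + u)) == frac (eta x + u / 2).
have key : forall u, 0 <= u <= t -> f u = f 0.
  apply: loc_const => // u0 hu0.
  have [d d0 hd] := hc u0 hu0 (4^-1) ltac:(lra).
  exists (Num.min d (4^-1)); first by rewrite lt_min d0; lra.
  move=> u hu; rewrite lt_min => /andP[hud hu4].
  set y0 := frac (x + u0); set y := frac (x + u).
  set w0 := frac (eta x + u0 / 2); set w := frac (eta x + u / 2).
  have hdy : dT y0 y < d.
    rewrite /y0 /y dT_fracl dT_fracr; apply: le_lt_trans (dT_abs _ _) _.
    have -> : x + u0 - (x + u) = - (u - u0) by lra.
    by rewrite normrN.
  have he := hd y (frac_onT _) hdy.
  have hw : dT w0 w < 8^-1.
    apply: le_lt_trans (dT_half _ _ _) _.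
    rewrite distrC; lra.
  have h0 : eta y0 = w0 \/ eta y0 = flip w0.
    apply: preimage2; [exact/eta_onT/frac_onT | exact: frac_onT |].
    by rewrite /w0 (E2_shift u0 hx) eta_E2 //; exact: frac_onT.
  have h1 : eta y = w \/ eta y = flip w.
    apply: preimage2; [exact/eta_onT/frac_onT | exact: frac_onT |].
    by rewrite /w (E2_shift u hx) eta_E2 //; exact: frac_onT.
  have tri := dT_tri.
  rewrite /f -/y0 -/y -/w0 -/w.
  case: h0 => e0; case: h1 => e1; rewrite e0 e1 in he *.
  - by rewrite !eqxx.
  - exfalso; have := dT_flip_self w; have := @dT_tri R w w0 (flip w).
    rewrite (dT_sym w0 w); lra.
  - exfalso; have := dT_flip_self w0; have := @dT_tri R w0 w (flip w0).
    rewrite (dT_sym (flip w0) w); lra.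
  - have /negbTE -> : flip w0 != w0 by apply/eqP/flip_neq/frac_onT.
    by have /negbTE -> : flip w != w by apply/eqP/flip_neq/frac_onT.
move=> u hu; apply/eqP; rewrite -/(f u) key // /f addr0 mul0r addr0.
by rewrite !frac_id //; exact: eta_onT.
Qed.

End Cont.


Section Meas.
Variable R : realType.

Lemma openT_meas (U : set R) : Defs.openT U -> measurable (U `&` @onT R).
Proof.
move=> oU.
have -> : U `&` @onT R = (U `&` `]0, 1[%classic) `|` (U `&` [set 0]).
  apply/seteqP; split => y.
    move=> [Uy /andP[y0 y1]]; have [ey|yn0] := eqVneq y 0; first by right; split.
    left; split => //=; rewrite in_itv /=; apply/andP; split => //.
    by rewrite lt_neqAle eq_sym yn0.
  move=> [[Uy]|[Uy]] /=; last by move=> ey; subst y; split => //; apply/andP; split; lra.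
  by rewrite in_itv /= => /andP[a b]; split => //; rewrite /onT (ltW a) b.
apply: measurableU.
  apply: open_measurable; rewrite openE => x [Ux hx].
  move: hx; rewrite /= in_itv /= => /andP[x0 x1].
  have hxT : onT x by rewrite /onT (ltW x0) x1.
  have [e e0 he] := oU x hxT Ux.
  rewrite /interior; apply/nbhs_ballP.
  exists (Num.min e (Num.min x (1 - x))) => /=.
    by rewrite !lt_min e0 x0 /=; lra.
  move=> y; rewrite -ball_normE /ball_ /= !lt_min => /andP[h1 /andP[h2 h3]].
  have := ler_norm (x - y); have := ler_normr (x - y) (x - y).
  have /ler_normlP[hA hB] : `|x - y| <= `|x - y| by [].
  move=> _ _.
  have hyT : onT y by rewrite /onT; apply/andP; split; lra.
  split; last by rewrite /= in_itv /=; apply/andP; split; lra.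
  apply: he => //; exact: le_lt_trans (dT_abs _ _) h1.
have [U0|U0] := pselect (U 0).
  have -> : U `&` [set 0] = [set (0 : R)].
    by apply/seteqP; split => y; [case | move=> -> ].
  exact: measurable_set1.
have -> : U `&` [set 0] = set0.
  by apply/seteqP; split => y // [Uy y0]; apply: U0; rewrite -y0.
exact: measurable0.
Qed.

Definition ballT (x e : R) := [set y | onT y /\ dT x y < e].

Lemma ballT_open x e : Defs.openT (ballT x e).
Proof.
move=> y hy [_ hd]; exists (e - dT x y); first lra.
move=> z hz hz'; split => //; have := @dT_tri R x y z; lra.
Qed.

Lemma ballT_meas x e : measurable (ballT x e).
Proof.
have := openT_meas (@ballT_open x e).
have -> // : ballT x e `&` @onT R = ballT x e.
by apply/seteqP; split => y; [case | move=> h; split => //; case: h].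
Qed.

Lemma onT_meas : measurable (@onT R).
Proof.
have -> : @onT R = [set` `[0, 1[%R].
  by apply/seteqP; split => y; rewrite /= in_itv.
exact: measurable_itv.
Qed.

Lemma closedT_meas (S : set R) : S `<=` @onT R -> Defs.openT (~` S) -> measurable S.
Proof.
move=> hS oC.
have -> : S = @onT R `\` (~` S `&` @onT R).
  apply/seteqP; split => y.
    by move=> Sy; split; [exact: hS | case].
  by move=> [hy hn]; apply: contrapT => nS; apply: hn.
apply: measurableD; first exact: onT_meas.
exact: openT_meas.
Qed.

Variable mu : probability R R.

Lemma null_nosupp : mu.-negligible [set y | onT y /\ ~ suppT mu y].
Proof.
pose B (n : nat) : set R :=
  if unpickle n is Some qr then
    if `[< mu (ballT (ratr qr.1) (ratr qr.2)) = 0%E >] then ballT (ratr qr.1) (ratr qr.2)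
    else set0
  else set0.
apply: (@negligibleS _ _ _ mu (\bigcup_n B n)); last first.
  apply: negligible_bigcup => n; rewrite /B.
  case: (unpickle n) => [qr|]; last exact: negligible_set0.
  case: ifP => [/asboolP h|_]; last exact: negligible_set0.
  by apply/negligibleP => //; exact: ballT_meas.
move=> y [hy ns].
have [e [e0 he]] : exists e : R, 0 < e /\ mu (ballT y e) = 0%E.
  apply: contrapT => hn; apply: ns; split => // e e0.
  rewrite lt0e measure_ge0 andbT; apply/negP => /eqP h0; apply: hn.
  by exists e.
have [q hq] := @rat_in_itvoo R (y - e / 3) (y + e / 3) ltac:(lra).
have [r hr] := @rat_in_itvoo R (e / 3) (2 * e / 3) ltac:(lra).
move: hq hr; rewrite !in_itv /= => /andP[q1 q2] /andP[r1 r2].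
have sub : ballT (ratr q) (ratr r) `<=` ballT y e.
  move=> z [hz hzd]; split => //.
  have h1 : dT y (ratr q) < e / 3.
    apply: le_lt_trans (dT_abs _ _) _; rewrite ltr_norml; apply/andP; split; lra.
  have := @dT_tri R y (ratr q) z; lra.
have hm0 : mu (ballT (ratr q) (ratr r)) = 0%E.
  apply/eqP; rewrite eq_le measure_ge0 andbT -he.
  by apply: le_measure => //; rewrite inE; exact: ballT_meas.
exists (pickle (q, r)); first exact: I.
rewrite /B pickleK /=.
have -> : `[< mu (ballT (ratr q) (ratr r)) = 0%E >] = true by apply/asboolP.
split => //.
apply: le_lt_trans (dT_abs _ _) _; rewrite ltr_norml; apply/andP; split; lra.
Qed.

End Meas.


Lemma seq_min (R : realType) (T : eqType) (f : T -> R) (l : seq T) (P : pred T) :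
  has P l -> exists x, [/\ x \in l, P x & forall y, y \in l -> P y -> f x <= f y].
Proof.
elim: l => //= a l IH /orP[Pa|hl].
  have [hl|hl] := boolP (has P l).
    have [x [xl Px hx]] := IH hl.
    have [le|lt] := leP (f a) (f x).
      exists a; split => //; first exact: mem_head.
      move=> y; rewrite inE => /orP[/eqP->//|yl] Py.
      exact: le_trans le (hx _ yl Py).
    exists x; split => //; first by rewrite inE xl orbT.
    move=> y; rewrite inE => /orP[/eqP-> _|yl Py]; first exact: ltW.
    exact: hx.
  exists a; split => //; first exact: mem_head.
  move=> y; rewrite inE => /orP[/eqP->//|yl] Py.
  by move/hasPn: hl => /(_ _ yl); rewrite Py.
have [x [xl Px hx]] := IH hl.
have [le|lt] := boolP (P a && (f a <= f x)).
  move/andP: le => [Pa le]; exists a; split => //; first exact: mem_head.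
  move=> y; rewrite inE => /orP[/eqP->//|yl] Py.
  exact: le_trans le (hx _ yl Py).
exists x; split => //; first by rewrite inE xl orbT.
move=> y; rewrite inE => /orP[/eqP->|yl] Py; last exact: hx.
by move: lt; rewrite Py /= -ltNge => /ltW.
Qed.

Section Structure.
Variable R : realType.
Variable eta : R -> R.
Variable s : seq R.
Hypothesis Hsel : preimage_selector eta.
Hypothesis Hu : uniq s.
Hypothesis Hs2 : (2 <= size s)%N.
Hypothesis Hdisc : discT eta = [set x | x \in s].
Hypothesis Hjump : forall x, discT eta x -> jumpT eta x.

Lemma s_onT x : x \in s -> onT x.
Proof. move=> h; have : discT eta x by rewrite Hdisc. by case. Qed.

Lemma cont_notin x : onT x -> x \notin s -> contT eta x.
Proof.
move=> hx hs; have [//|hn] := pselect (contT eta x).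
have : discT eta x by split.
by rewrite Hdisc /= => h; rewrite h in hs.
Qed.

Definition nxt d e := [/\ d \in s, e \in s, e != d &
  forall x, x \in s -> x != d -> frac (e - d) <= frac (x - d)].

Lemma nxt_ex d : d \in s -> exists e, nxt d e.
Proof.
move=> ds.
have hr : has (predC1 d) s.
  apply/hasP.
  have : (0 < size (rem d s))%N by rewrite size_rem // -subn1 subn_gt0.
  case E: (rem d s) => [//|x r] _.
  have : x \in rem d s by rewrite E mem_head.
  rewrite mem_rem_uniq // inE => /andP[xd xs]; by exists x.
have [e [es ed he]] := seq_min (fun e => frac (e - d)) hr.
by exists e; split => // x xs xd; apply: he.
Qed.

Lemma nxt_uniq d e e' : nxt d e -> nxt d e' -> e = e'.
Proof.
move=> [ds es ed he] [_ es' ed' he'].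
have h1 := he _ es' ed'; have h2 := he' _ es ed.
have hq : frac (e - d) = frac (e' - d) by apply/eqP; rewrite eq_le h1 h2.
apply: frac_eq0; [exact: s_onT | exact: s_onT |].
have := fracP (e - e'); have := frac3 d e' e; rewrite hq.
move=> [] h /andP[? ?]; lra.
Qed.

Definition nextf d : R :=
  if pselect (exists e, nxt d e) is left H then projT1 (cid H) else d.

Lemma nextfP d : d \in s -> nxt d (nextf d).
Proof.
move=> ds; rewrite /nextf; case: pselect => [H|H]; last by exfalso; apply: H; exact: nxt_ex.
by case: (cid H).
Qed.

Lemma nextf_in d : d \in s -> nextf d \in s.
Proof. by move=> /nextfP[]. Qed.

Lemma nextf_neq d : d \in s -> nextf d != d.
Proof. by move=> /nextfP[]. Qed.

Definition len d := frac (nextf d - d).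

Lemma len_pos d : d \in s -> 0 < len d.
Proof.
move=> ds; apply: frac_diff_pos; [exact/s_onT/nextf_in | exact: s_onT |].
by apply/eqP; exact: nextf_neq.
Qed.

Lemma len_lt1 d : len d < 1.
Proof. by have /andP[] := fracP (nextf d - d). Qed.

Lemma no_D d x : d \in s -> x \in s -> 0 < frac (x - d) -> frac (x - d) < len d -> False.
Proof.
move=> ds xs h1 h2; have [_ _ _ hm] := nextfP ds.
have xd : x != d by apply/eqP => e; rewrite e subrr frac0 in h1; lra.
have := hm _ xs xd; rewrite /len in h2; lra.
Qed.

Definition O d := [set y | onT y /\ 0 < frac (y - d) < len d].

Lemma O_notin d y : d \in s -> O d y -> y \notin s.
Proof.
move=> ds [hy /andP[h1 h2]]; apply/negP => ys; exact: no_D ds ys h1 h2.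
Qed.

Lemma O_cont d y : d \in s -> O d y -> contT eta y.
Proof. move=> ds hO; apply: cont_notin; [by case: hO | exact: O_notin hO]. Qed.

Lemma prev_ex x : x \in s -> exists p, p \in s /\ nextf p = x.
Proof.
move=> xs.
have hr : has (predC1 x) s.
  apply/hasP.
  have : (0 < size (rem x s))%N by rewrite size_rem // -subn1 subn_gt0.
  case E: (rem x s) => [//|y r] _.
  have : y \in rem x s by rewrite E mem_head.
  rewrite mem_rem_uniq // inE => /andP[yx ys]; by exists y.
have [p [ps px hp]] := seq_min (fun p => frac (x - p)) hr.
exists p; split => //; symmetry; apply: (@nxt_uniq p); last exact: nextfP.
split => //; first by rewrite eq_sym.
move=> z zs zp; rewrite leNgt; apply/negP => hlt.
have zx : z != x.
  by apply/eqP => e; rewrite e ltxx in hlt.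
have := hp _ zs zx; have := frac3 p z x.
have hzp : 0 < frac (z - p) by apply: frac_diff_pos; [exact: s_onT|exact: s_onT|exact/eqP].
have := fracP (x - z) => /andP[? ?].
move=> [] h /=; lra.
Qed.

Lemma cover y : onT y -> y \notin s -> exists d, d \in s /\ O d y.
Proof.
move=> hy ys.
have hr : has predT s by case: s Hs2.
have [p [ps _ hp]] := seq_min (fun p => frac (y - p)) hr.
exists p; split => //; split => //.
have yp : y <> p by move=> e; rewrite e ps in ys.
have h0 := frac_diff_pos hy (s_onT ps) yp.
rewrite h0 /=; rewrite ltNge; apply/negP => hle.
have en := nextf_in ps.
have := hp _ en isT; have := frac3 p (nextf p) y; have := len_pos ps.
have := fracP (y - nextf p) => /andP[? ?].
rewrite /len in hle *; move=> hl [] h; lra.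
Qed.

Lemma O_disj d e y : d \in s -> e \in s -> d != e -> O d y -> O e y -> False.
Proof.
move=> ds es de [hy /andP[a1 a2]] [_ /andP[b1 b2]].
have hde : 0 < frac (d - e) by apply: frac_diff_pos; [exact: s_onT|exact: s_onT|exact/eqP].
have hed : 0 < frac (e - d).
  by apply: frac_diff_pos; [exact: s_onT|exact: s_onT|apply/eqP; rewrite eq_sym].
have := fracP (d - e) => /andP[_ c1]; have := fracP (e - d) => /andP[_ c2].
have [le|lt] := leP (frac (y - d)) (frac (y - e)).
  case: (frac3 e d y) => h.
    by apply: (no_D es ds hde); lra.
  lra.
case: (frac3 d e y) => h.
  by apply: (no_D ds es hed); lra.
lra.
Qed.

Lemma nextf_inj d e : d \in s -> e \in s -> nextf d = nextf e -> d = e.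
Proof.
move=> ds es hn; apply/eqP/negPn/negP => de.
have hde : 0 < frac (d - e) by apply: frac_diff_pos; [exact: s_onT|exact: s_onT|exact/eqP].
have hed : 0 < frac (e - d).
  by apply: frac_diff_pos; [exact: s_onT|exact: s_onT|apply/eqP; rewrite eq_sym].
have := fracP (d - e) => /andP[_ c1]; have := fracP (e - d) => /andP[_ c2].
have l1 := len_pos ds; have l2 := len_pos es.
move: l1 l2; rewrite /len hn => l1 l2.
set a := nextf e in l1 l2 *.
have [le|lt] := leP (frac (a - d)) (frac (a - e)).
  case: (frac3 e d a) => h.
    by apply: (no_D es ds hde); rewrite /len -/a; lra.
  lra.
case: (frac3 d e a) => h.
  by apply: (no_D ds es hed); rewrite /len hn -/a; lra.
lra.
Qed.

Lemma pos_below (a b c : R) : 0 < a -> 0 < b -> 0 < c ->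
  exists t : R, [/\ 0 < t, t < a, t < b & t < c].
Proof.
move=> a0 b0 c0; exists (Num.min a (Num.min b c) / 2).
have h1 : Num.min a (Num.min b c) <= a by rewrite ge_min lexx.
have h2 : Num.min a (Num.min b c) <= b by rewrite ge_min ge_min lexx orbT.
have h3 : Num.min a (Num.min b c) <= c by rewrite ge_min ge_min lexx !orbT.
have h4 : 0 < Num.min a (Num.min b c) by rewrite !lt_min a0 b0 c0.
split; lra.
Qed.

Definition mid d := frac (d + len d / 2).
Definition c d := frac (eta (mid d) - len d / 4).

Lemma O_param d t : d \in s -> 0 < t < len d -> O d (frac (d + t)).
Proof.
move=> ds /andP[t0 t1]; have := len_lt1 d => l1.
split; first exact: frac_onT.
by rewrite frac_param; [apply/andP; split | rewrite /onT; apply/andP; split]; lra.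
Qed.

Lemma arc_eta d t : d \in s -> 0 < t < len d -> eta (frac (d + t)) = frac (c d + t / 2).
Proof.
move=> ds /andP[t0 t1]; have := len_lt1 d => l1; have := len_pos ds => l0.
have hm : onT (mid d) by exact: frac_onT.
case: (leP (len d / 2) t) => hlt.
- have hfr : forall u, frac (mid d + u) = frac (d + (len d / 2 + u)).
    by move=> u; rewrite /mid frac_addl addrA.
  have hc : forall u, 0 <= u <= t - len d / 2 -> contT eta (frac (mid d + u)).
    move=> u /andP[u0 u1]; rewrite hfr; apply: (O_cont ds); apply: O_param => //.
    apply/andP; split; lra.
  have := @continuation _ _ Hsel (mid d) (t - len d / 2) hm ltac:(lra) hc (t - len d / 2).
  rewrite hfr; have -> : len d / 2 + (t - len d / 2) = t by lra.
  move=> -> ; last by apply/andP; split; lra.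
  rewrite /c frac_addl; congr frac; lra.
- have hx : onT (frac (d + t)) by exact: frac_onT.
  have hfr : forall u, frac (frac (d + t) + u) = frac (d + (t + u)).
    by move=> u; rewrite frac_addl addrA.
  have hc : forall u, 0 <= u <= len d / 2 - t -> contT eta (frac (frac (d + t) + u)).
    move=> u /andP[u0 u1]; rewrite hfr; apply: (O_cont ds); apply: O_param => //.
    apply/andP; split; lra.
  have := @continuation _ _ Hsel (frac (d + t)) (len d / 2 - t) hx ltac:(lra) hc (len d / 2 - t).
  rewrite hfr; have -> : t + (len d / 2 - t) = len d / 2 by lra.
  move=> Hm; rewrite /c /mid Hm; last by apply/andP; split; lra.
  rewrite (frac_addl (frac (eta (frac (d + t)) + (len d / 2 - t) / 2) - len d / 4)).
  rewrite -addrA (frac_addl (eta (frac (d + t)) + (len d / 2 - t) / 2)).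
  have -> : eta (frac (d + t)) + (len d / 2 - t) / 2 + (- (len d / 4) + t / 2) = eta (frac (d + t)) by lra.
  by symmetry; apply: frac_id; exact: (eta_onT Hsel (frac_onT _)).
Qed.

Lemma c_onT d : onT (c d).
Proof. exact: frac_onT. Qed.

Lemma two_c d : d \in s -> exists n : int, 2 * c d = d + n%:~R.
Proof.
move=> ds; have l0 := len_pos ds; have l1 := len_lt1 d.
have ht : 0 < len d / 2 < len d by apply/andP; split; lra.
have := arc_eta ds ht => h.
have := eta_E2 Hsel (frac_onT (d + len d / 2)); rewrite h E2_frac.
have -> : 2 * (c d + len d / 2 / 2) = 2 * c d + len d / 2 by lra.
move=> /frac_eq_int [n hn].
exists n; lra.
Qed.

Lemma E2_c d : d \in s -> E2 (c d) = d.
Proof.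
move=> ds; have [n hn] := two_c ds; rewrite /E2 hn.
apply: (@fracE _ _ _ n) => //; exact: s_onT.
Qed.

Definition endp d := frac (c d + len d / 2).

Lemma E2_end d : d \in s -> E2 (endp d) = nextf d.
Proof.
move=> ds; have [n hn] := two_c ds; rewrite /endp E2_frac.
have [m hm] := frac_int (nextf d - d).
apply: (@fracE _ _ _ (n - m)); last exact/s_onT/nextf_in.
rewrite intrB; rewrite /len in hm *; lra.
Qed.

Lemma right_lim_c d L : d \in s -> onT L -> right_limT eta d L -> L = c d.
Proof.
move=> ds hL H; apply: dT_lt_all => //; first exact: c_onT.
move=> e e0; have [dl dl0 hd] := H (e / 2) ltac:(lra).
have [t [t0 t1 t2 t3]] := pos_below dl0 (len_pos ds) e0.
have h1 := hd t t0 t1.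
rewrite (arc_eta ds) in h1; last by apply/andP; split.
have h2 : dT (frac (c d + t / 2)) (c d) <= t / 2.
  rewrite dT_fracl; apply: le_trans (dT_abs _ _) _.
  have -> : c d + t / 2 - c d = t / 2 by lra.
  rewrite ger0_norm; lra.
have := @dT_tri R L (frac (c d + t / 2)) (c d); rewrite dT_sym in h1; lra.
Qed.

Lemma left_lim_end d L : d \in s -> onT L -> left_limT eta (nextf d) L -> L = endp d.
Proof.
move=> ds hL H; apply: dT_lt_all => //; first exact: frac_onT.
move=> e e0; have [dl dl0 hd] := H (e / 2) ltac:(lra).
have [t [t0 t1 t2 t3]] := pos_below dl0 (len_pos ds) e0.
have h1 := hd t t0 t1.
have hfe : frac (nextf d - t) = frac (d + (len d - t)).
  have [m hm] := frac_int (nextf d - d).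
  apply: (@frac_eqmod _ _ _ m); rewrite /len in hm *; lra.
rewrite hfe (arc_eta ds) in h1; last by apply/andP; split; lra.
have h2 : dT (frac (c d + (len d - t) / 2)) (endp d) <= t / 2.
  rewrite /endp; apply: le_trans (dT_param _ _ _) _.
  have -> : (len d - t) / 2 - len d / 2 = - (t / 2) by lra.
  by rewrite normrN ger0_norm //; lra.
have := @dT_tri R L (frac (c d + (len d - t) / 2)) (endp d); rewrite dT_sym in h1; lra.
Qed.

Lemma jump_info x : x \in s -> exists p, [/\ p \in s, nextf p = x,
  (eta x = c x \/ eta x = endp p), endp p <> c x & c x = flip (endp p)].
Proof.
move=> xs; have hd : discT eta x by rewrite Hdisc.
have [L [Rl [[hL hR] hl hr LR he]]] := Hjump hd.
have [p [ps px]] := prev_ex xs; exists p.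
have eR := right_lim_c xs hR hr.
rewrite -px in hl; have eL := left_lim_end ps hL hl.
subst Rl L; split => //.
  by case: he => ->; [right|left].
apply: preimage2'; [exact: c_onT | exact: frac_onT | | by move=> h; apply: LR].
by rewrite E2_c // E2_end.
Qed.

Definition A d := [set y | onT y /\ frac (y - c d) <= len d / 2].

Lemma A_param d t : 0 <= t <= len d -> A d (frac (c d + t / 2)).
Proof.
move=> /andP[t0 t1]; have := len_lt1 d => l1; split; first exact: frac_onT.
rewrite frac_param; first lra.
rewrite /onT; apply/andP; split; lra.
Qed.

Lemma A_c d : A d (c d).
Proof.
split; first exact: c_onT.
rewrite subrr frac0; have := fracP (nextf d - d) => /andP[h _].
rewrite /len; lra.
Qed.

Lemma A_end d : d \in s -> A d (endp d).
Proof.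
move=> ds; apply: A_param; rewrite lexx andbT; exact/ltW/len_pos.
Qed.

Lemma eta_in_A x : onT x -> exists d, d \in s /\ A d (eta x).
Proof.
move=> hx; have [xs|xs] := boolP (x \in s).
  have [p [ps _ [->|->] _ _]] := jump_info xs.
    by exists x; split => //; exact: A_c.
  by exists p; split => //; exact: A_end.
have [d [ds [_ /andP[h1 h2]]]] := cover hx xs.
exists d; split => //.
rewrite -(frac_recon d hx) arc_eta //; last by apply/andP; split.
apply: A_param; apply/andP; split; lra.
Qed.

Definition Fset := Defs.closureT [set eta x | x in @onT R].

Lemma arc_out a m y : 0 <= m -> m < frac (y - a) ->
  exists2 dl : R, 0 < dl & forall y', dT y y' < dl -> m < frac (y' - a).
Proof.
move=> m0 hm; have := fracP (y - a) => /andP[f0 f1].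
exists (Num.min (frac (y - a) - m) (1 - frac (y - a))).
  by rewrite lt_min; apply/andP; split; lra.
move=> y'; rewrite lt_min => /andP[h1 h2].
have hn := @frac_near R a y y' ltac:(lra) h2.
have /ler_normlP[hA hB] : `|frac (y' - a) - frac (y - a)| <= dT y y' by rewrite hn.
lra.
Qed.

Lemma arc_in a m y : m <= 1 -> 0 < frac (y - a) < m ->
  exists2 dl : R, 0 < dl & forall y', dT y y' < dl -> 0 < frac (y' - a) < m.
Proof.
move=> m1 /andP[hm0 hm1]; have := fracP (y - a) => /andP[f0 f1].
exists (Num.min (frac (y - a)) (m - frac (y - a))).
  by rewrite lt_min; apply/andP; split; lra.
move=> y'; rewrite lt_min => /andP[h1 h2].
have hn := @frac_near R a y y' h1 ltac:(lra).
have /ler_normlP[hA hB] : `|frac (y' - a) - frac (y - a)| <= dT y y' by rewrite hn.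
apply/andP; split; lra.
Qed.

Lemma fin_delta (y : R) (l : seq R) (P : R -> R -> Prop) :
  (forall d, d \in l -> exists2 dl : R, 0 < dl & forall y', onT y' -> dT y y' < dl -> P d y') ->
  exists2 dl : R, 0 < dl & forall y', onT y' -> dT y y' < dl -> forall d, d \in l -> P d y'.
Proof.
elim: l => [|a l IH] H.
  by exists 1 => //; lra.
have [da da0 ha] := H a (mem_head _ _).
have [dl dl0 hl] := IH (fun d hd => H d (mem_behead (s:=a :: l) hd)).
exists (Num.min da dl); first by rewrite lt_min da0 dl0.
move=> y' hy'; rewrite lt_min => /andP[h1 h2] d; rewrite inE => /orP[/eqP->|hd].
  exact: ha.
exact: hl.
Qed.

Lemma A_out d y : onT y -> ~ A d y ->
  exists2 dl : R, 0 < dl & forall y', onT y' -> dT y y' < dl -> ~ A d y'.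
Proof.
move=> hy hA.
have hm : len d / 2 < frac (y - c d).
  by rewrite ltNge; apply/negP => h; apply: hA.
have l0 : 0 <= len d / 2 by have := fracP (nextf d - d) => /andP[h _]; rewrite /len; lra.
have [dl dl0 hdl] := arc_out l0 hm.
exists dl => // y' _ hd [_ h]; have := hdl _ hd; lra.
Qed.

Lemma A_sub_F d : d \in s -> A d `<=` Fset.
Proof.
move=> ds z [hz hu]; split => // e e0.
have l0 := len_pos ds; have l1 := len_lt1 d.
set u := frac (z - c d) in hu.
have u0 : 0 <= u by have := fracP (z - c d) => /andP[].
have [h [h0 h1 h2 _]] := pos_below e0 (ltac:(lra) : 0 < len d / 2) e0.
have [s' [s1 s2 s3]] : exists s' : R, [/\ 0 < s' < len d, `|2 * u - s'| < 2 * e & True].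
  case: (ltP u (len d / 4)) => hu4.
    exists (2 * u + h / 2); split => //; first by apply/andP; split; lra.
    have -> : 2 * u - (2 * u + h / 2) = - (h / 2) by lra.
    rewrite normrN ger0_norm; lra.
  exists (2 * u - h / 2); split => //; first by apply/andP; split; lra.
  have -> : 2 * u - (2 * u - h / 2) = h / 2 by lra.
  rewrite ger0_norm; lra.
exists (eta (frac (d + s'))).
  by exists (frac (d + s')) => //; exact: frac_onT.
rewrite (arc_eta ds s1).
rewrite -{1}(frac_recon (c d) hz) -/u.
apply: le_lt_trans (dT_param _ _ _) _.
have -> : u - s' / 2 = (2 * u - s') / 2 by lra.
rewrite normrM normfV (ger0_norm (x:=2)) //; lra.
Qed.

Lemma F_sub_A z : Fset z -> exists d, d \in s /\ A d z.
Proof.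
move=> [hz hcl].
have [//|hn] := pselect (exists d, d \in s /\ A d z).
have H : forall d, d \in s -> exists2 dl : R, 0 < dl &
    forall y', onT y' -> dT z y' < dl -> ~ A d y'.
  by move=> d ds; apply: A_out => // hA; apply: hn; exists d.
have [dl dl0 hdl] := fin_delta H.
have [_ [x hx <-] hd] := hcl dl dl0.
have [d [ds hA]] := eta_in_A hx.
by exfalso; apply: (hdl _ (eta_onT Hsel hx) hd d ds).
Qed.

Lemma int_disj d e z : d \in s -> e \in s -> d != e -> onT z ->
  0 < frac (z - c d) < len d / 2 -> 0 < frac (z - c e) < len e / 2 -> False.
Proof.
move=> ds es de hz /andP[u0 u1] /andP[v0 v1].
have l1 := len_lt1 d; have l2 := len_lt1 e.
have hy : forall f, f \in s -> 0 < frac (z - c f) < len f / 2 ->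
    eta (frac (f + 2 * frac (z - c f))) = z /\ O f (frac (f + 2 * frac (z - c f))).
  move=> f fs /andP[w0 w1]; have := len_lt1 f => lf.
  split; last by apply: O_param => //; apply/andP; split; lra.
  rewrite (arc_eta fs); last by apply/andP; split; lra.
  have -> : 2 * frac (z - c f) / 2 = frac (z - c f) by lra.
  exact: frac_recon.
have [h1 o1] := hy d ds ltac:(apply/andP; split; lra).
have [h2 o2] := hy e es ltac:(apply/andP; split; lra).
have := eta_E2 Hsel (frac_onT (d + 2 * frac (z - c d))).
have := eta_E2 Hsel (frac_onT (e + 2 * frac (z - c e))).
rewrite h1 h2 => he hd.
by apply: (O_disj ds es de o1); rewrite -hd he.
Qed.

Lemma A_disj d e z : d \in s -> e \in s -> d != e -> A d z -> A e z -> False.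
Proof.
move=> ds es de [hz hu] [_ hv].
have l0 := len_pos ds; have l1 := len_lt1 d.
have l0' := len_pos es; have l1' := len_lt1 e.
set u := frac (z - c d) in hu; set v := frac (z - c e) in hv.
have u0 : 0 <= u by have := fracP (z - c d) => /andP[].
have v0 : 0 <= v by have := fracP (z - c e) => /andP[].
have shift : forall eps : R, 0 < u + eps < len d / 2 -> 0 < v + eps < len e / 2 -> False.
  move=> eps /andP[a1 a2] /andP[b1 b2].
  apply: (@int_disj d e (frac (z + eps))) => //; first exact: frac_onT.
    by rewrite frac_shift; rewrite -/u; apply/andP; split; lra.
  by rewrite frac_shift; rewrite -/v; apply/andP; split; lra.
have zc : forall f, f \in s -> frac (z - c f) = 0 -> z = c f.
  by move=> f fs h; apply: frac_eq0 => //; exact: c_onT.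
have ze : forall f, frac (z - c f) = len f / 2 -> z = endp f.
  by move=> f h; rewrite /endp -h frac_recon.
have cc : c d = c e -> False.
  by move=> h; move/eqP: de; apply; rewrite -(E2_c ds) -(E2_c es) h.
have ee : endp d = endp e -> False.
  move=> h; move/eqP: de; apply; apply: nextf_inj => //.
  by rewrite -(E2_end ds) -(E2_end es) h.
have ce : forall f g, f \in s -> g \in s -> c f = endp g -> False.
  move=> f g fs gs h.
  have hf : f = nextf g by rewrite -(E2_c fs) -(E2_end gs) h.
  have [p [ps pf _ hne _]] := jump_info fs.
  have pg : p = g by apply: nextf_inj => //; rewrite pf.
  by apply: hne; rewrite pg.
have [uE|[uI|uE]] : u = 0 \/ (0 < u < len d / 2) \/ u = len d / 2.
- by case: (ltP 0 u) => h; [case: (ltP u (len d / 2)) => h'; [right; left; apply/andP|right; right; lra] | left; lra].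
- have [vE|[vI|vE]] : v = 0 \/ (0 < v < len e / 2) \/ v = len e / 2.
  + by case: (ltP 0 v) => h; [case: (ltP v (len e / 2)) => h'; [right; left; apply/andP|right; right; lra] | left; lra].
  + by apply: cc; rewrite -(zc d ds uE) -(zc e es vE).
  + have [eps [e0 e1 e2 _]] := pos_below (ltac:(lra) : 0 < len d / 2) (ltac:(lra) : 0 < len e / 2 - v) ltr01.
    by apply: (shift eps); apply/andP; split; lra.
  + by apply: (ce d e ds es); rewrite -(zc d ds uE) -(ze e vE).
- have [vE|[vI|vE]] : v = 0 \/ (0 < v < len e / 2) \/ v = len e / 2.
  + by case: (ltP 0 v) => h; [case: (ltP v (len e / 2)) => h'; [right; left; apply/andP|right; right; lra] | left; lra].
  + have [eps [e0 e1 e2 _]] := pos_below (ltac:(lra) : 0 < len d / 2 - u) (ltac:(lra) : 0 < len e / 2) ltr01.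
    by apply: (shift eps); apply/andP; split; lra.
  + by apply: (shift 0); apply/andP; split; lra.
  + have [eps [e0 e1 e2 _]] := pos_below (ltac:(lra) : 0 < u) (ltac:(lra) : 0 < len e / 2) ltr01.
    by apply: (shift (- eps)); apply/andP; split; lra.
- have [vE|[vI|vE]] : v = 0 \/ (0 < v < len e / 2) \/ v = len e / 2.
  + by case: (ltP 0 v) => h; [case: (ltP v (len e / 2)) => h'; [right; left; apply/andP|right; right; lra] | left; lra].
  + by apply: (ce e d es ds); rewrite -(zc e es vE) -(ze d uE).
  + have [eps [e0 e1 e2 _]] := pos_below (ltac:(lra) : 0 < len d / 2) (ltac:(lra) : 0 < v) ltr01.
    by apply: (shift (- eps)); apply/andP; split; lra.
  + by apply: ee; rewrite -(ze d uE) -(ze e vE).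
Qed.

Lemma A_conn d : connectedT (A d).
Proof.
move=> U V oU oV hcov hdisj.
have [h|/eqP/set0P[z0 [Az0 Uz0]]] := pselect (A d `&` U = set0); first by left.
right; apply/seteqP; split => // z1 [Az1 Vz1]; exfalso.
have hl : 0 <= len d / 2 by have := fracP (nextf d - d) => /andP[h _]; rewrite /len; lra.
have ll := len_lt1 d.
pose f t := `[< U (frac (c d + t)) >].
have inA : forall t, 0 <= t <= len d / 2 -> A d (frac (c d + t)).
  move=> t /andP[t0 t1]; split; first exact: frac_onT.
  rewrite frac_param //; rewrite /onT; apply/andP; split; lra.
have key := @loc_const R f 0 (len d / 2) hl.
have : forall t, 0 <= t <= len d / 2 -> f t = f 0.
  apply: key => t ht.
  have hy := inA t ht; have hyT : onT (frac (c d + t)) by exact: frac_onT.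
  have [Uy|nUy] := pselect (U (frac (c d + t))).
    have [e e0 he] := oU _ hyT Uy.
    exists e => // t' ht' hd; rewrite /f; apply/asboolP/idP; rewrite asboolE.
      by move=> _.
    move=> _; apply: he; first exact: frac_onT.
    by apply: le_lt_trans (dT_param _ _ _) _; rewrite distrC.
  have Vy : V (frac (c d + t)) by case: (hcov _ hy).
  have [e e0 he] := oV _ hyT Vy.
  exists e => // t' ht' hd; rewrite /f.
  have Vy' : V (frac (c d + t')).
    apply: he; first exact: frac_onT.
    by apply: le_lt_trans (dT_param _ _ _) _; rewrite distrC.
  have nU' : ~ U (frac (c d + t')).
    move=> hU; have : (A d `&` U `&` V) (frac (c d + t')) by split; [split; [exact: inA|]|].
    by rewrite hdisj.
  apply/asboolP/idP; rewrite asboolE.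
    by move=> h; exfalso; apply: nU'.
  by move=> h; exfalso; apply: nUy.
move=> hall.
have hu0 : 0 <= frac (z0 - c d) <= len d / 2 by case: Az0 => _ h; have := fracP (z0 - c d) => /andP[? _]; apply/andP.
have hu1 : 0 <= frac (z1 - c d) <= len d / 2 by case: Az1 => _ h; have := fracP (z1 - c d) => /andP[? _]; apply/andP.
have f0 : f (frac (z0 - c d)) by rewrite /f frac_recon; [apply/asboolP | case: Az0].
rewrite hall // -(hall _ hu1) /f frac_recon in f0; last by case: Az1.
move/asboolP: f0 => Uz1.
have : (A d `&` U `&` V) z1 by [].
by rewrite hdisj.
Qed.

Lemma petal_A P : petal Fset P -> exists d, d \in s /\ P = A d.
Proof.
move=> [PF [z Pz] cP mP].
have [d [ds Adz]] := F_sub_A (PF _ Pz).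
exists d; split => //.
pose U := [set y | forall e, e \in s -> e != d -> ~ A e y].
pose V := ~` A d.
have oU : Defs.openT U.
  move=> y hy Uy.
  have H : forall e, e \in s -> exists2 dl : R, 0 < dl &
      forall y', onT y' -> dT y y' < dl -> (e != d -> ~ A e y').
    move=> e es; have [ed|ed] := eqVneq e d.
      by exists 1 => //; rewrite ed eqxx.
    have [dl dl0 hdl] := A_out hy (Uy e es ed).
    by exists dl => // y' hy' hd _; exact: hdl.
  have [dl dl0 hdl] := fin_delta H.
  by exists dl => // y' hy' hd e es ed; apply: hdl.
have oV : Defs.openT V.
  by move=> y hy Vy; have [dl dl0 hdl] := A_out hy Vy; exists dl.
have hPd : P `<=` A d.
  have cov : P `<=` U `|` V.
    move=> y Py; have [hA|hA] := pselect (A d y).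
      left => e es ed hAe; exact: (A_disj es ds ed hAe hA).
    by right.
  have dis : P `&` U `&` V = set0.
    apply/seteqP; split => // y [[Py Uy] Vy].
    have [e [es hAe]] := F_sub_A (PF _ Py).
    have [ed|ed] := eqVneq e d; first by apply: Vy; rewrite -ed.
    exact: (Uy e es ed hAe).
  case: (cP U V oU oV cov dis) => h.
    exfalso; have : (P `&` U) z.
      split => // e es ed hAe; exact: (A_disj es ds ed hAe Adz).
    by rewrite h.
  move=> y Py; have [//|nA] := pselect (A d y).
  by have : (P `&` V) y by []; rewrite h.
symmetry; apply: mP => //; first exact: A_conn.
exact: A_sub_F.
Qed.

Lemma near_s x p : x \in s -> p \in s -> nextf p = x ->
  exists2 dl : R, 0 < dl & forall y, onT y -> dT x y < dl ->
    y = x \/ (y = frac (x + dT x y) /\ 0 < dT x y < len x) \/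
    (y = frac (p + (len p - dT x y)) /\ 0 < dT x y < len p).
Proof.
move=> xs ps px.
exists (Num.min (len x) (len p)); first by rewrite lt_min len_pos // len_pos.
move=> y hy; rewrite lt_min => /andP[h1 h2].
have h0 := dT_ge0 x y.
have [e0|epos] := eqVneq (dT x y) 0.
  by left; symmetry; apply: dT0 => //; exact: s_onT.
have hp : 0 < dT x y by rewrite lt_neqAle eq_sym epos h0.
case: (dT_cases x hy) => hyE.
  by right; left; split => //; apply/andP.
right; right; split; last by apply/andP.
move: hyE; set t := dT x y => hyE.
rewrite hyE; apply: (@frac_eqmod _ _ _ (Num.floor (nextf p - p))).
rewrite /len /frac -px; lra.
Qed.

Section Flip.
Variable d : R.
Hypothesis ds : d \in s.

Definition eta2 x := if `[< A d (eta x) >] then flip (eta x) else eta x.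

Lemma eta2_sel : preimage_selector eta2.
Proof.
move=> x hx; rewrite /eta2; case: ifP => _.
  by split; [exact: flip_onT | rewrite E2_flip; exact: eta_E2].
by split; [exact: eta_onT | exact: eta_E2].
Qed.

Lemma eta2_in y : A d (eta y) -> eta2 y = flip (eta y).
Proof. by move=> h; rewrite /eta2; case: ifP => //; move/asboolP. Qed.

Lemma eta2_out y : ~ A d (eta y) -> eta2 y = eta y.
Proof. by move=> h; rewrite /eta2; case: ifP => // /asboolP. Qed.

Lemma eta2_outA e y : e \in s -> e != d -> A e (eta y) -> eta2 y = eta y.
Proof. move=> es ed hA; apply: eta2_out => hA'; exact: (A_disj es ds ed hA hA'). Qed.

Lemma cont_agree x dl : onT x -> 0 < dl ->
  (forall y, onT y -> dT x y < dl -> eta2 y = eta y) -> contT eta2 x <-> contT eta x.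
Proof.
move=> hx dl0 H.
have Hx : eta2 x = eta x by apply: H => //; rewrite dT_xx.
split => hc e e0; have [dd dd0 hdd] := hc e e0.
  exists (Num.min dd dl); first by rewrite lt_min dd0 dl0.
  move=> y hy; rewrite lt_min => /andP[a1 a2].
  by rewrite -Hx -(H y) //; apply: hdd.
exists (Num.min dd dl); first by rewrite lt_min dd0 dl0.
move=> y hy; rewrite lt_min => /andP[a1 a2].
by rewrite Hx H //; apply: hdd.
Qed.

Lemma cont_flip x dl : onT x -> 0 < dl ->
  (forall y, onT y -> dT x y < dl -> eta2 y = flip (eta y)) -> contT eta x -> contT eta2 x.
Proof.
move=> hx dl0 H hc e e0; have [dd dd0 hdd] := hc e e0.
have Hx : eta2 x = flip (eta x) by apply: H => //; rewrite dT_xx.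
exists (Num.min dd dl); first by rewrite lt_min dd0 dl0.
move=> y hy; rewrite lt_min => /andP[a1 a2].
by rewrite Hx H // dT_flip; apply: hdd.
Qed.

Lemma cont_notin2 x : onT x -> x \notin s -> contT eta2 x.
Proof.
move=> hx xs; have [e [es [_ ho]]] := cover hx xs; move/andP: ho => [q1 q2].
have [dl dl0 hdl] := @arc_in e (len e) x (ltW (len_lt1 e)) ltac:(apply/andP; split; [exact: q1 | exact: q2]).
have inO : forall y, onT y -> dT x y < dl -> O e y /\ A e (eta y).
  move=> y hy hd; have hO : O e y by split => //; apply: hdl.
  split => //; case: hO => _ /andP[w1 w2].
  rewrite -(frac_recon e hy) (arc_eta es); last by apply/andP; split.
  apply: A_param; apply/andP; split; lra.
have hc := cont_notin hx xs.
have [ed|ed] := eqVneq e d.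
  apply: (@cont_flip x dl) => // y hy hd; apply: eta2_in; rewrite -ed.
  by case: (inO y hy hd).
apply/(@cont_agree x dl) => // y hy hd; apply: (eta2_outA es ed).
by case: (inO y hy hd).
Qed.

Lemma agree_s x : x \in s -> x != d -> x != nextf d ->
  exists2 dl : R, 0 < dl & forall y, onT y -> dT x y < dl -> eta2 y = eta y.
Proof.
move=> xs xd xd'.
have [p [ps px hex hne hcf]] := jump_info xs.
have pd : p != d by apply/eqP => e; move: xd'; rewrite -px e eqxx.
have [dl dl0 hdl] := near_s xs ps px.
exists dl => // y hy hd.
case: (hdl y hy hd) => [->|[[hyE ht]|[hyE ht]]].
- case: hex => hv.
    by apply: (eta2_outA xs xd); rewrite hv; exact: A_c.
  by apply: (eta2_outA ps pd); rewrite hv; exact: A_end.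
- apply: (eta2_outA xs xd); rewrite hyE (arc_eta xs ht).
  apply: A_param; move/andP: ht => [? ?]; apply/andP; split; lra.
- apply: (eta2_outA ps pd); rewrite hyE (arc_eta ps); last first.
    by move/andP: ht => [? ?]; apply/andP; split; lra.
  apply: A_param; move/andP: ht => [? ?]; apply/andP; split; lra.
Qed.

Lemma dT_halfstep (a t : R) : 0 <= t -> dT (frac (a + t / 2)) (frac a) <= t / 2.
Proof.
move=> t0; rewrite dT_fracl dT_fracr; apply: le_trans (dT_abs _ _) _.
have -> : a + t / 2 - a = t / 2 by lra.
by rewrite ger0_norm; lra.
Qed.

Lemma cont_d : contT eta2 d.
Proof.
have [p [ps pd hex hne hcf]] := jump_info ds.
have pnd : p != d by apply/eqP => e; have := nextf_neq ps; rewrite pd e eqxx.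
have efl : endp p = flip (c d) by rewrite hcf flipK //; exact: frac_onT.
have hv : eta2 d = endp p.
  case: hex => hv.
    by rewrite eta2_in hv ?efl //; exact: A_c.
  by rewrite (eta2_outA ps pnd) hv //; exact: A_end.
have [dl dl0 hdl] := near_s ds ps pd.
move=> e e0; exists (Num.min dl (2 * e)); first by rewrite lt_min dl0; lra.
move=> y hy; rewrite lt_min => /andP[a1 a2]; rewrite hv.
case: (hdl y hy a1) => [->|[[hyE ht]|[hyE ht]]].
- by rewrite hv dT_xx.
- move/andP: ht => [t0 t1].
  rewrite hyE (eta2_in _); last first.
    rewrite (arc_eta ds); last by apply/andP; split.
    by apply: A_param; apply/andP; split; lra.
  rewrite (arc_eta ds); last by apply/andP; split.
  rewrite efl dT_flip dT_sym -{2}(frac_id (c_onT d)).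
  apply: le_lt_trans (dT_halfstep _ (ltW t0)) _; lra.
- move/andP: ht => [t0 t1].
  have hi : 0 < len p - dT d y < len p by apply/andP; split; lra.
  rewrite hyE (eta2_outA ps pnd); last first.
    rewrite (arc_eta ps hi); apply: A_param; apply/andP; split; lra.
  rewrite (arc_eta ps hi) /endp.
  apply: le_lt_trans (dT_param _ _ _) _.
  have -> : len p / 2 - (len p - dT d y) / 2 = dT d y / 2 by lra.
  rewrite ger0_norm; lra.
Qed.

Lemma cont_d' : contT eta2 (nextf d).
Proof.
set d' := nextf d.
have d's : d' \in s by exact: nextf_in.
have d'd : d' != d by exact: nextf_neq.
have [p [ps pd hex hne hcf]] := jump_info d's.
have pe : p = d by apply: nextf_inj.
subst p.
have hv : eta2 d' = c d'.
  case: hex => hv.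
    by rewrite (eta2_outA d's d'd) hv //; exact: A_c.
  by rewrite eta2_in hv ?hcf //; exact: A_end.
have [dl dl0 hdl] := near_s d's ds pd.
move=> e e0; exists (Num.min dl (2 * e)); first by rewrite lt_min dl0; lra.
move=> y hy; rewrite lt_min => /andP[a1 a2]; rewrite hv.
case: (hdl y hy a1) => [->|[[hyE ht]|[hyE ht]]].
- by rewrite hv dT_xx.
- move/andP: ht => [t0 t1].
  rewrite hyE (eta2_outA d's d'd); last first.
    rewrite (arc_eta d's); last by apply/andP; split.
    by apply: A_param; apply/andP; split; lra.
  rewrite (arc_eta d's); last by apply/andP; split.
  rewrite dT_sym -{2}(frac_id (c_onT d')).
  apply: le_lt_trans (dT_halfstep _ (ltW t0)) _; lra.
- move/andP: ht => [t0 t1].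
  have hi : 0 < len d - dT d' y < len d by apply/andP; split; lra.
  rewrite hyE (eta2_in _); last first.
    rewrite (arc_eta ds hi); apply: A_param; apply/andP; split; lra.
  rewrite (arc_eta ds hi) hcf dT_flip /endp.
  apply: le_lt_trans (dT_param _ _ _) _.
  have -> : len d / 2 - (len d - dT d' y) / 2 = dT d' y / 2 by lra.
  rewrite ger0_norm; lra.
Qed.

Definition s2 := rem (nextf d) (rem d s).

Lemma s2_uniq : uniq s2.
Proof. by rewrite /s2; do 2 apply: rem_uniq. Qed.

Lemma s2_size : size s2 = (size s - 2)%N.
Proof.
have hin : nextf d \in rem d s.
  by rewrite mem_rem_uniq // inE nextf_neq // nextf_in.
by rewrite /s2 size_rem // size_rem // -!subn1 -subnDA.
Qed.

Lemma mem_s2 x : (x \in s2) = [&& x != nextf d, x != d & x \in s].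
Proof.
by rewrite /s2 mem_rem_uniq ?rem_uniq // inE mem_rem_uniq // inE.
Qed.

Lemma disc2 : discT eta2 = [set x | x \in s2].
Proof.
apply/seteqP; split => x.
  move=> [hx hnc]; rewrite /= mem_s2.
  have [xs|xs] := boolP (x \in s); last by exfalso; apply: hnc; exact: cont_notin2.
  have [xd|xd] := eqVneq x d; first by exfalso; apply: hnc; rewrite xd; exact: cont_d.
  have [xd'|xd'] := eqVneq x (nextf d); first by exfalso; apply: hnc; rewrite xd'; exact: cont_d'.
  by [].
rewrite /= mem_s2 => /and3P[xd' xd xs].
have hx := s_onT xs; split => // hc.
have [dl dl0 hdl] := agree_s xs xd xd'.
have : discT eta x by rewrite Hdisc.
by case => _; apply; apply/(cont_agree hx dl0 hdl).
Qed.

Lemma jump2 x : discT eta2 x -> jumpT eta2 x.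
Proof.
rewrite disc2 /= mem_s2 => /and3P[xd' xd xs].
have hx := s_onT xs.
have [dl dl0 hdl] := agree_s xs xd xd'.
have : discT eta x by rewrite Hdisc.
move/Hjump => [L [Rl [hLR hl hr LR hv]]].
have Hx : eta2 x = eta x by apply: hdl => //; rewrite dT_xx.
exists L, Rl; split => //; last by rewrite Hx.
  move=> e e0; have [dd dd0 hdd] := hl e e0.
  exists (Num.min dd dl); first by rewrite lt_min dd0 dl0.
  move=> t t0; rewrite lt_min => /andP[a1 a2].
  rewrite hdl //; first exact: hdd.
    exact: frac_onT.
  rewrite dT_fracr; apply: le_lt_trans (dT_abs _ _) _.
  have -> : x - (x - t) = t by lra.
  rewrite ger0_norm; lra.
move=> e e0; have [dd dd0 hdd] := hr e e0.
exists (Num.min dd dl); first by rewrite lt_min dd0 dl0.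
move=> t t0; rewrite lt_min => /andP[a1 a2].
rewrite hdl //; first exact: hdd.
  exact: frac_onT.
rewrite dT_fracr; apply: le_lt_trans (dT_abs _ _) _.
have -> : x - (x + t) = - t by lra.
rewrite normrN ger0_norm; lra.
Qed.

Lemma selector2 : selector_with (size s - 2) eta2.
Proof.
split; first exact: eta2_sel.
  by exists s2; split; [exact: s2_uniq | exact: s2_size | exact: disc2].
exact: jump2.
Qed.

Definition F2 := Defs.closureT [set eta2 x | x in @onT R].

Lemma F2_sup z : Fset z -> ~ A d z -> F2 z.
Proof.
move=> [hz hcl] nA; split => // e e0.
have [dl dl0 hdl] := A_out hz nA.
have [t [t0 t1 t2 _]] := pos_below e0 dl0 ltr01.
have [_ [x hx <-] hd] := hcl t t0.
exists (eta2 x); first by exists x.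
rewrite eta2_out; first lra.
by apply: hdl => //; [exact: eta_onT | lra].
Qed.

Lemma F2_not : ~ F2 (c d).
Proof.
move=> [_ hcl].
have hz := c_onT d.
have H : forall e, e \in s -> exists2 dl : R, 0 < dl &
    forall y', onT y' -> dT (c d) y' < dl -> (e != d -> ~ A e y').
  move=> e es; have [ed|ed] := eqVneq e d.
    by exists 1 => //; rewrite ed eqxx.
  have [dl dl0 hdl] := A_out hz (fun h => A_disj es ds ed h (A_c d)).
  by exists dl => // y' hy' hd' _; exact: hdl.
have [dl dl0 hdl] := fin_delta H.
have l1 := len_lt1 d.
have hf : len d / 2 < frac (c d - flip (c d)).
  rewrite /flip frac_subr; have -> : c d - (c d + 2^-1) = - 2^-1 by lra.
  have -> : frac (- 2^-1 : R) = 2^-1.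
    by apply: (@fracE _ _ _ (-1)); [lra | rewrite /onT; apply/andP; split; lra].
  lra.
have l0 : 0 <= len d / 2 by have := fracP (nextf d - d) => /andP[h _]; rewrite /len; lra.
have [dl2 dl20 hdl2] := arc_out l0 hf.
have [t [t0 t1 t2 _]] := pos_below dl0 dl20 ltr01.
have [_ [x hx <-] hd] := hcl t t0.
have [ad|nad] := pselect (A d (eta x)).
  rewrite eta2_in // in hd.
  have := hdl2 _ (ltac:(lra) : dT (c d) (flip (eta x)) < dl2).
  rewrite /flip frac_subr frac_subl.
  have -> : eta x + 2^-1 - (c d + 2^-1) = eta x - c d by lra.
  by case: ad => _; lra.
rewrite eta2_out // in hd.
have [e [es hAe]] := eta_in_A hx.
have [ed|ed] := eqVneq e d; first by apply: nad; rewrite -ed.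
by apply: (hdl (eta x) (eta_onT Hsel hx) ltac:(lra) e es ed).
Qed.

End Flip.

Lemma A_meas d : measurable (A d).
Proof.
apply: closedT_meas; first by move=> y [].
by move=> y hy hn; have [dl dl0 hdl] := A_out hy hn; exists dl.
Qed.

Section Supp.
Variable mu : probability R R.
Hypothesis hsupp : suppT mu `<=` Fset.

Lemma supp_not_A d : d \in s -> mu (A d) = 0%E -> forall z, A d z -> ~ suppT mu z.
Proof.
move=> ds hA0 z Az [hz hpos].
have H : forall e, e \in s -> exists2 dl : R, 0 < dl &
    forall y', onT y' -> dT z y' < dl -> (e != d -> ~ A e y').
  move=> e es; have [ed|ed] := eqVneq e d.
    by exists 1 => //; rewrite ed eqxx.
  have [dl dl0 hdl] := A_out hz (fun h => A_disj es ds ed h Az).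
  by exists dl => // y' hy' hd' _; exact: hdl.
have [dl dl0 hdl] := fin_delta H.
have sub : ballT z dl `<=` A d `|` [set y | onT y /\ ~ suppT mu y].
  move=> y [hy hd]; have [Ay|nAy] := pselect (A d y); first by left.
  right; split => // sy.
  have [e [es hAe]] := F_sub_A (hsupp sy).
  have [ed|ed] := eqVneq e d; first by apply: nAy; rewrite -ed.
  exact: (hdl y hy hd e es ed).
have hneg : mu.-negligible (ballT z dl).
  apply: (@negligibleS _ _ _ mu _ _ sub); apply: negligibleU; last exact: null_nosupp.
  by apply/negligibleP => //; exact: A_meas.
move/negligibleP: hneg => /(_ (ballT_meas z dl)) h0.
by have := hpos dl dl0; rewrite /ballT in h0; rewrite h0 ltxx.
Qed.

End Supp.

End Structure.


Unset Implicit Arguments.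

Theorem lemma4 (R : realType) (mu : probability R R) (p : nat) (F P : set R) :
  (mu [set x | onT x] = 1)%E ->
  (forall A : set R, measurable A -> mu ((@E2 R) @^-1` A) = mu A) ->
  (3 <= p)%N ->
  flower p F ->
  suppT mu `<=` F ->
  petal F P ->
  mu P = 0%E ->
  exists Ft : set R, [/\ flower (p - 2) Ft, suppT mu `<=` Ft & ~ (P `<=` Ft)].
Proof.
move=> _ _ hp [eta [[Hsel [s [Hu Hsz Hdisc]] Hjump] FE]] hsupp hpet hP0.
subst F.
have Hs2 : (2 <= size s)%N by rewrite Hsz; lia.
have [d [ds PE]] := petal_A Hsel Hu Hs2 Hdisc Hjump hpet.
exists (F2 eta s d); split.
- exists (eta2 eta s d); split => //.
  by rewrite -Hsz; apply: selector2.
- move=> z hz; apply: F2_sup => //; first exact: hsupp.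
  move=> Az; apply: (supp_not_A Hsel Hu Hs2 Hdisc Hjump hsupp ds _ Az hz).
  by rewrite -PE.
- move=> sub; apply: (F2_not Hsel Hu Hs2 Hdisc Hjump ds); apply: sub.
  by rewrite PE; exact: A_c.
Qed.
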